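(* Let $Z_0=(X_0,Y_0)$ be a Filippov system for which $p\in\Sigma$ is an invisible cusp-fold singularity of degree $1$, i.e. $p$ is a cusp of $X_0$ and an invisible fold of $Y_0$, $S_{X_0}$ and $S_{Y_0}$ intersect transversally at $p$, and $Y_0X_0f(p)\neq0$. Then there exist a neighborhood $\mathcal{U}$ of $Z_0$ in $\Omega^\infty$ and a neighborhood $U\subset\mathbb{R}^3$ of $p$ such that no $Z\in\mathcal{U}$ has a crossing limit cycle contained in $U$.
   Context: Let $M\subset\mathbb{R}^3$ be open, $f:M\to\mathbb{R}$ smooth with $0$ a regular value, $\Sigma=f^{-1}(0)$, $M^{\pm}=\{\pm f>0\}$. $\Omega^\infty$ is the space of Filippov (piecewise smooth) systems $Z=(X,Y)$ with switching manifold $\Sigma$, where $X,Y$ are $\mathcal{C}^\infty$ vector fields, $X$ acting on $M^+$ and $Y$ on $M^-$, with the usual $\mathcal{C}^\infty$ topology on pairs; trajectories follow Filippov's convention. Lie derivatives: $Xf(p)=\langle X(p),\nabla f(p)\rangle$, $X^kf=X(X^{k-1}f)$, $YXf=Y(Xf)$; $S_X=\{p\in\Sigma:Xf(p)=0\}$. The crossing region is $\Sigma^c=\{p\in\Sigma: Xf(p)Yf(p)>0\}$. A point $p\in\Sigma$ is a fold of $X$ if $Xf(p)=0\neq X^2f(p)$; a cusp of $X$ if $Xf(p)=X^2f(p)=0$, $X^3f(p)\neq0$ and $\det(\nabla f(p),\nabla Xf(p),\nabla X^2f(p))\neq0$. A fold $p$ of $Y$ (acting on $M^-$) is invisible if $Y^2f(p)>0$.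 A crossing limit cycle (CLC) of $Z$ is an isolated closed orbit of $Z$ formed by concatenating regular orbit arcs of $X$ in $M^+$ and of $Y$ in $M^-$, meeting $\Sigma$ only at points of $\Sigma^c$. *)

(* Defs.v *)
From mathcomp Require Import all_boot all_order all_algebra.
From mathcomp Require Import all_classical all_reals all_analysis.
Set Implicit Arguments. Unset Strict Implicit. Unset Printing Implicit Defensive.
Import Order.TTheory GRing.Theory Num.Theory.
Import numFieldNormedType.Exports.
Local Open Scope classical_set_scope.
Local Open Scope ring_scope.

Definition ecoord {R : realType} (i : 'I_3) : 'rV[R]_3 := delta_mx 0 i.

Definition pd {R : realType} {W : normedModType R} (i : 'I_3)
  (g : 'rV[R]_3 -> W) : 'rV[R]_3 -> W := fun x => 'D_(ecoord i) g x.

Definition iter_pd {R : realType} {W : normedModType R} (s : seq 'I_3)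
  (g : 'rV[R]_3 -> W) : 'rV[R]_3 -> W := foldr (fun i h => pd i h) g s.

Definition smooth_on {R : realType} {W : normedModType R} (M : set 'rV[R]_3)
  (g : 'rV[R]_3 -> W) : Prop :=
  forall (s : seq 'I_3) (x : 'rV[R]_3), M x ->
    {for x, continuous (iter_pd s g)} /\
    forall i : 'I_3, derivable (iter_pd s g) x (ecoord i).

Definition grad {R : realType} (g : 'rV[R]_3 -> R) (x : 'rV[R]_3) : 'rV[R]_3 :=
  \row_i pd i g x.

Definition lie {R : realType} (X : 'rV[R]_3 -> 'rV[R]_3) (g : 'rV[R]_3 -> R)
  : 'rV[R]_3 -> R := fun x => \sum_(i < 3) X x 0 i * pd i g x.

Definition det3 {R : realType} (a b c : 'rV[R]_3) : R :=
  \det (col_mx a (col_mx b c) : 'M[R]_3).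

Definition regular_zero {R : realType} (M : set 'rV[R]_3) (f : 'rV[R]_3 -> R) : Prop :=
  forall x, M x -> f x = 0 -> grad f x != 0.

Definition Sigma {R : realType} (M : set 'rV[R]_3) (f : 'rV[R]_3 -> R) : set 'rV[R]_3 :=
  [set x | M x /\ f x = 0].
Definition Mplus {R : realType} (M : set 'rV[R]_3) (f : 'rV[R]_3 -> R) : set 'rV[R]_3 :=
  [set x | M x /\ 0 < f x].
Definition Mminus {R : realType} (M : set 'rV[R]_3) (f : 'rV[R]_3 -> R) : set 'rV[R]_3 :=
  [set x | M x /\ f x < 0].

Definition crossing_region {R : realType} (M : set 'rV[R]_3) (f : 'rV[R]_3 -> R)
  (X Y : 'rV[R]_3 -> 'rV[R]_3) : set 'rV[R]_3 :=
  [set x | Sigma M f x /\ 0 < lie X f x * lie Y f x].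

Definition is_cusp {R : realType} (f : 'rV[R]_3 -> R) (X : 'rV[R]_3 -> 'rV[R]_3)
  (p : 'rV[R]_3) : Prop :=
  [/\ lie X f p = 0, lie X (lie X f) p = 0, lie X (lie X (lie X f)) p != 0 &
      det3 (grad f p) (grad (lie X f) p) (grad (lie X (lie X f)) p) != 0].

Definition is_fold {R : realType} (f : 'rV[R]_3 -> R) (Y : 'rV[R]_3 -> 'rV[R]_3)
  (p : 'rV[R]_3) : Prop :=
  lie Y f p = 0 /\ lie Y (lie Y f) p != 0.

(* p is an invisible fold of Y (Y acting on M^-) *)
Definition is_invisible_fold {R : realType} (f : 'rV[R]_3 -> R)
  (Y : 'rV[R]_3 -> 'rV[R]_3) (p : 'rV[R]_3) : Prop :=
  is_fold f Y p /\ 0 < lie Y (lie Y f) p.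

(* S_X = Sigma ∩ {Xf = 0} and S_Y = Sigma ∩ {Yf = 0} meet transversally at p:
   their tangent lines ker(grad f) ∩ ker(grad Xf) and ker(grad f) ∩ ker(grad Yf)
   span T_p Sigma, i.e. grad f, grad Xf, grad Yf are linearly independent. *)
Definition SX_SY_transversal {R : realType} (f : 'rV[R]_3 -> R)
  (X Y : 'rV[R]_3 -> 'rV[R]_3) (p : 'rV[R]_3) : Prop :=
  det3 (grad f p) (grad (lie X f) p) (grad (lie Y f) p) != 0.

Definition crossing_periodic_orbit {R : realType} (M : set 'rV[R]_3)
  (f : 'rV[R]_3 -> R) (X Y : 'rV[R]_3 -> 'rV[R]_3) (g : R -> 'rV[R]_3) (T : R)
  : Prop :=
  [/\ 0 < T, continuous g, (forall t, g (t + T) = g t) &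
   exists (n : nat) (tt : nat -> R),
     [/\ [/\ (0 < n)%N, tt 0%N = 0 & tt n = T],
         (forall k, (k < n)%N -> tt k < tt k.+1),
         (forall k, (k <= n)%N -> crossing_region M f X Y (g (tt k))) &
         (forall k, (k < n)%N ->
            (forall t, tt k < t < tt k.+1 ->
               Mplus M f (g t) /\ is_derive t (1 : R) g (X (g t))) \/
            (forall t, tt k < t < tt k.+1 ->
               Mminus M f (g t) /\ is_derive t (1 : R) g (Y (g t))))]].

Definition crossing_limit_cycle {R : realType} (M : set 'rV[R]_3)
  (f : 'rV[R]_3 -> R) (X Y : 'rV[R]_3 -> 'rV[R]_3) (g : R -> 'rV[R]_3) (T : R)
  : Prop :=
  crossing_periodic_orbit M f X Y g T /\
  exists V : set 'rV[R]_3, [/\ open V, range g `<=` V &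
    forall (g' : R -> 'rV[R]_3) (T' : R),
      crossing_periodic_orbit M f X Y g' T' -> range g' `<=` V -> range g' = range g].

(* basic neighbourhood of the weak (compact-open) C^oo topology:
   all partial derivatives of order <= k are eps-close on the compact K *)
Definition Cinf_close {R : realType} (K : set 'rV[R]_3) (k : nat) (eps : R)
  (X X0 : 'rV[R]_3 -> 'rV[R]_3) : Prop :=
  forall (s : seq 'I_3) (x : 'rV[R]_3), (size s <= k)%N -> K x ->
    `|iter_pd s X x - iter_pd s X0 x| < eps.

(* Main.v *)
Require Import Defs.
From mathcomp Require Import all_boot all_order all_algebra.
From mathcomp Require Import all_classical all_reals all_analysis.
From mathcomp Require Import ring lra.
Import Order.TTheory GRing.Theory Num.Theory.
Import numFieldNormedType.Exports.
Local Open Scope classical_set_scope.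
Local Open Scope ring_scope.

Section H.
Context {R : realType}.

Definition dot (a b : 'rV[R]_3) : R := \sum_(i < 3) a 0 i * b 0 i.

Lemma lie_dot (X : 'rV[R]_3 -> 'rV[R]_3) g x : lie X g x = dot (X x) (grad g x).
Proof. by rewrite /lie /dot; apply: eq_bigr => i _; rewrite mxE. Qed.

Lemma dot_lin a u v c d : dot a (c *: u + d *: v) = c * dot a u + d * dot a v.
Proof.
rewrite /dot !mulr_sumr -big_split; apply: eq_bigr => i _; rewrite !mxE.
by rewrite mulrDr !(mulrCA (a 0 i)).
Qed.

Lemma dotBl a b w : dot (a - b) w = dot a w - dot b w.
Proof. rewrite /dot -sumrB; apply: eq_bigr => i _; rewrite !mxE; ring. Qed.

Lemma dot_cont w : continuous (fun y : 'rV[R]_3 => dot y w).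
Proof.
move=> y; apply: differentiable_continuous.
have -> : (fun y : 'rV[R]_3 => dot y w) = \sum_(i < 3) (fun y : 'rV[R]_3 => y 0 i * w 0 i).
  by rewrite fct_sumE.
apply: differentiable_sum => i.
apply: differentiableM; first exact: differentiable_coord.
exact: differentiable_cst.
Qed.

Lemma dot_derive (g : R -> 'rV[R]_3) (t : R) (D w : 'rV[R]_3) :
  is_derive t (1:R) g D -> is_derive t (1:R) (fun s => dot (g s) w) (dot D w).
Proof.
move=> hg.
have hd : derivable g t 1 by case: hg.
have hi : forall i : 'I_3, is_derive t (1:R) (fun s => g s 0 i) (D 0 i).
  move=> i; have di : derivable (fun s => g s 0 i) t 1 := (derivable_mxP _ _ _).1 hd 0 i.
  apply: DeriveDef => //.
  have := derive_mx hd; rewrite (@derive_val _ _ _ _ _ _ _ hg) => ->.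
  by rewrite mxE.
have hs := @is_derive_sum _ _ _ 3 (fun i => w 0 i \*: (fun s => g s 0 i)) t 1
  (fun i => w 0 i *: D 0 i) (fun i => is_deriveZ (w 0 i) (hi i)).
have -> : (fun s => dot (g s) w) = \sum_(i < 3) (w 0 i \*: (fun s => g s 0 i)).
  rewrite fct_sumE; apply/funext => s; rewrite /dot; apply: eq_bigr => i _.
  by rewrite /= mulrC.
apply: is_derive_eq hs _; rewrite /dot; apply: eq_bigr => i _.
by rewrite /= mulrC.
Qed.

Lemma step_incr (phi : R -> R) (a b : R) : a < b -> continuous phi ->
  (forall t, a < t < b -> exists2 d, 0 < d & is_derive t (1:R) phi d) ->
  phi a < phi b.
Proof.
move=> ab pc hd.
have hD : forall x, x \in `]a, b[ -> is_derive x (1:R) phi ('D_1 phi x).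
  move=> x; rewrite in_itv /= => /hd [d _ hx].
  by apply: derivableP; case: hx.
have [|c cin] := MVT ab hD; first exact: continuous_subspaceT.
move=> /eqP; rewrite subr_eq => /eqP ->.
rewrite ltrDr; apply: mulr_gt0; last by rewrite subr_gt0.
move: cin; rewrite in_itv /= => /hd [d dpos hx].
by rewrite (@derive_val _ _ _ _ _ _ _ hx).
Qed.

Lemma chain_incr (phi : R -> R) (tt : nat -> R) (n : nat) :
  (forall k, (k < n)%N -> phi (tt k) < phi (tt k.+1)) -> (0 < n)%N ->
  phi (tt 0%N) < phi (tt n).
Proof.
elim: n => [//|n IH] h _.
case: n IH h => [|n] IH h; first exact: h.
apply: lt_trans (h n.+1 _) => //.
by apply: IH => // k kn; apply: h; apply: ltn_trans kn _.
Qed.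

Lemma choose_w (a b u v : 'rV[R]_3) : dot a u = 0 -> dot a v != 0 -> dot b u != 0 ->
  exists w, 0 < dot a w /\ 0 < dot b w.
Proof.
move=> h2 h3 hyx.
exists (dot a v *: v + ((1 + `|dot a v * dot b v|) / dot b u) *: u).
rewrite !dot_lin h2 mulr0 addr0 mulfVK //; split.
  by rewrite -expr2 exprn_even_gt0 // h3 orbT.
have := ler_norm (- (dot a v * dot b v)); rewrite normrN; lra.
Qed.
End H.

Theorem theorem3p2 (R : realType) (M : set 'rV[R]_3) (f : 'rV[R]_3 -> R)
  (X0 Y0 : 'rV[R]_3 -> 'rV[R]_3) (p : 'rV[R]_3) :
  open M -> smooth_on M f -> regular_zero M f ->
  smooth_on M X0 -> smooth_on M Y0 ->
  Sigma M f p ->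
  is_cusp f X0 p -> is_invisible_fold f Y0 p -> SX_SY_transversal f X0 Y0 p ->
  lie Y0 (lie X0 f) p != 0 ->
  exists (K : set 'rV[R]_3) (k : nat) (eps : R),
    [/\ compact K, K `<=` M, 0 < eps &
    exists U : set 'rV[R]_3, nbhs p U /\
      forall X Y : 'rV[R]_3 -> 'rV[R]_3,
        smooth_on M X -> smooth_on M Y ->
        Cinf_close K k eps X X0 -> Cinf_close K k eps Y Y0 ->
        forall (g : R -> 'rV[R]_3) (T : R),
          ~ (crossing_limit_cycle M f X Y g T /\ range g `<=` U)].
Proof.
move=> oM _ _ sX0 sY0 [Mp _] [_ h2 h3 _] _ _ hyx.
rewrite lie_dot in h2; rewrite lie_dot in h3; rewrite lie_dot in hyx.
have [w [aw bw]] := @choose_w _ _ _ _ _ h2 h3 hyx.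
set m := Num.min (dot (X0 p) w) (dot (Y0 p) w).
have m0 : 0 < m by rewrite lt_min aw bw.
have ma : m <= dot (X0 p) w by rewrite ge_min lexx.
have mb : m <= dot (Y0 p) w by rewrite ge_min lexx orbT.
have cX0 : {for p, continuous X0} by have [] := sX0 [::] p Mp.
have cY0 : {for p, continuous Y0} by have [] := sY0 [::] p Mp.
have nX : \forall x \near p, m / 2 < dot (X0 x) w.
  have := continuous_comp cX0 (dot_cont w (X0 p)).
  move/cvgr_gt => /(_ (m / 2)); apply.
  by apply: lt_le_trans ma; rewrite ltr_pdivrMr // ltr_pMr // ltr1n.
have nY : \forall x \near p, m / 2 < dot (Y0 x) w.
  have := continuous_comp cY0 (dot_cont w (Y0 p)).
  move/cvgr_gt => /(_ (m / 2)); apply.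
  by apply: lt_le_trans mb; rewrite ltr_pdivrMr // ltr_pMr // ltr1n.
have nM : \forall x \near p, M x by apply: oM.
have [r r0 hr] : nbhs_ball p (fun x => M x /\ (m / 2 < dot (X0 x) w /\ m / 2 < dot (Y0 x) w)).
  by apply/nbhs_ballP; apply: (filterS3 _ _ nM nX nY).
have [e e0 he] : nbhs_ball (0 : 'rV[R]_3) (fun y => `|dot y w| < m / 2).
  apply/nbhs_ballP.
  have := dot_cont w 0.
  move=> /(@cvgr_dist_lt _ _ _ _ _ (fun y => dot y w)) /(_ (m / 2)).
  rewrite divr_gt0 // => /(_ isT).
  have -> : dot 0 w = 0 by rewrite /dot big1 // => i _; rewrite mxE mul0r.
  by apply: filterS => y; rewrite sub0r normrN.
have r2 : 0 < r / 2 by rewrite divr_gt0.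
have r2r : r / 2 < r by rewrite ltr_pdivrMr // ltr_pMr // ltr1n.
have KB := closed_ball_subset r2 r2r.
exists (closed_ball p (r / 2)), 0%N, e; split => //.
- apply: bounded_closed_compact; last exact: closed_ball_closed.
  rewrite /= /bounded_near; near=> N => x /KB bx /=.
  rewrite -ball_normE /= in bx.
  have := ler_normB p (p - x).
  rewrite (_ : p - (p - x) = x); last by rewrite opprB addrC subrK.
  move/le_trans; apply.
  apply: (@le_trans _ _ (`|p| + r)); first by rewrite lerD2l ltW.
  by near: N; apply: nbhs_pinfty_ge; rewrite num_real.
- by move=> x /KB /hr [].
exists (ball p (r / 2)); split; first by apply: nbhsx_ballx; rewrite divr_gt0.
move=> X Y _ _ cX cY g T [[[T0 gc gper [n [tt [[n0 tt0 ttn] incr _ arcs]]]] _] rg].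
have posU : forall (Z Z0 : 'rV[R]_3 -> 'rV[R]_3), Cinf_close (closed_ball p (r / 2)) 0 e Z Z0 ->
   (forall x, ball p r x -> m / 2 < dot (Z0 x) w) ->
   forall x, ball p (r / 2) x -> 0 < dot (Z x) w.
  move=> Z Z0 cZ hZ0 x bx.
  have Kx : closed_ball p (r / 2) x by apply: subset_closed_ball.
  have := cZ [::] x (leqnn 0) Kx; rewrite /iter_pd /= => hd.
  have := he (Z x - Z0 x); rewrite -ball_normE /ball_ /= sub0r normrN => /(_ hd).
  rewrite dotBl ltr_norml => /andP [l1 l2].
  have h0 : m / 2 < dot (Z0 x) w by apply: hZ0; apply: KB.
  move: l1 l2 h0; clear; lra.
have pX : forall x, ball p (r / 2) x -> 0 < dot (X x) w.
  by apply: (posU X X0 cX) => x /hr [_ []].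
have pY : forall x, ball p (r / 2) x -> 0 < dot (Y x) w.
  by apply: (posU Y Y0 cY) => x /hr [_ []].
set phi := fun s => dot (g s) w.
have pc : continuous phi := fun s => continuous_comp (gc s) (dot_cont w (g s)).
have : phi (tt 0%N) < phi (tt n).
  apply: chain_incr => // k kn; apply: step_incr => //; first exact: incr.
  move=> t tk; case: (arcs k kn) => h; have [_ hd] := h t tk.
    exists (dot (X (g t)) w); first by apply: pX; apply: rg; apply: imageT.
    exact: dot_derive.
  exists (dot (Y (g t)) w); first by apply: pY; apply: rg; apply: imageT.
  exact: dot_derive.
rewrite /phi tt0 ttn; have := gper 0; rewrite add0r => ->.
by rewrite ltxx.
Unshelve. all: by end_near.
Qed.
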